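(* Let $X$ be a nonempty discrete (finite or countable) set and $p^*$ a probability distribution on $X$ (the ground truth). Let $X^{\checkmark}=\{x\in X: p^*(x)>0\}$ (valid points) and $X^{\times}=\{x\in X:p^*(x)=0\}$ (invalid points). Let $x_1,\dots,x_N\in X^{\checkmark}$ ($N\ge1$) and $q(x)=\frac1N\#\{i:x_i=x\}$. Let $\hat p^*$ be any probability distribution on $X$ maximizing $\mathbb{E}_{q(x)}[p(x)]=\frac1N\sum_{i=1}^N p(x_i)$ over all probability distributions $p$ on $X$. Then $\hat p^*$ is sound: for all $x\in X$, $\hat p^*(x)>0$ implies $x\in X^{\checkmark}$ (equivalently, $x\in X^{\times}$ implies $\hat p^*(x)=0$).
   Context: A probability distribution on $X$ is $p:X\to[0,\infty)$ with $\sum_x p(x)=1$. A distribution $p$ ''proves'' $x$ when $p(x)>0$; $p$ is sound if every point it proves is valid. *)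

(* Defs.v *)
From HB Require Import structures.
From mathcomp Require Import all_boot all_order all_algebra.
From mathcomp Require Import all_classical all_reals all_analysis.
Set Implicit Arguments. Unset Strict Implicit. Unset Printing Implicit Defensive.
Import Order.TTheory GRing.Theory Num.Theory.
Local Open Scope classical_set_scope.
Local Open Scope ring_scope.

Definition is_distr (R : realType) (X : countType) (p : X -> R) : Prop :=
  (forall x, 0 <= p x) /\ (\esum_(x in [set: X]) (p x)%:E = 1%E).

Definition sound (R : realType) (X : countType) (pstar p : X -> R) : Prop :=
  forall x, 0 < p x -> 0 < pstar x.

Definition emp_obj (R : realType) (X : countType) (N : nat) (xs : 'I_N -> X)
  (p : X -> R) : R := N%:R^-1 * \sum_(i < N) p (xs i).

(* Main.v *)
Require Import Defs.
From HB Require Import structures.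
From mathcomp Require Import all_boot all_order all_algebra.
From mathcomp Require Import all_classical all_reals all_analysis.
From mathcomp Require Import lra.
Import Order.TTheory GRing.Theory Num.Theory.
Local Open Scope ring_scope.

Lemma esum_point (R : realType) (X : countType) (y : X) (c : R) : 0 <= c ->
  (\esum_(x in [set: X]) ((if x == y then c else 0)%:E) = c%:E)%E.
Proof.
move=> c0.
rewrite (eq_esum (b := fun x => if x \in [set y]%classic then c%:E else 0%E)); last first.
  move=> x _; case: eqP => [->|Hx]; first by rewrite mem_set.
  by rewrite memNset.
by rewrite -esum_mkcond esum_set1.
Qed.

Theorem mainTheorem4 (R : realType) (X : countType) (x0 : X)
  (pstar : X -> R) (hpstar : is_distr pstar)
  (N : nat) (hN : (0 < N)%N) (xs : 'I_N -> X)
  (hvalid : forall i, 0 < pstar (xs i))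
  (phat : X -> R) (hphat : is_distr phat)
  (hmax : forall p : X -> R, is_distr p -> emp_obj xs p <= emp_obj xs phat) :
  sound pstar phat.
Proof.
move=> y hy; rewrite ltNge; apply/negP => hle.
have py0 : pstar y = 0 by apply/eqP; rewrite eq_le hle hpstar.1.
have neq : forall i, xs i != y.
  by move=> i; apply/eqP => E; have := hvalid i; rewrite E py0 ltxx.
set c := phat y.
set i0 := Ordinal hN.
set a := xs i0.
set f := fun x => if x == y then 0 else phat x.
set h := fun x : X => if x == a then c else 0.
set p := fun x => f x + h x.
have f0 : forall x, 0 <= f x by move=> x; rewrite /f; case: eqP => // _; apply hphat.1.
have h0 : forall x, 0 <= h x by move=> x; rewrite /h; case: eqP => // _; exact: ltW.
have hp : is_distr p.
  split; first by move=> x; rewrite /p addr_ge0.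
  rewrite /p (eq_esum (b := fun x => ((f x)%:E + (h x)%:E)%E)) //.
  rewrite esumD; [|by move=> x _; rewrite lee_fin|by move=> x _; rewrite lee_fin].
  rewrite /h esum_point ?ltW //.
  have E : (\esum_(x in [set: X]) (phat x)%:E = \esum_(x in [set: X]) ((f x)%:E + (if x == y then c else 0)%:E))%E.
    apply: eq_esum => x _; rewrite /f /c; case: (eqVneq x y) => [->|Hx]; rewrite ?eqxx ?(negbTE Hx) /= ?add0r ?addr0 //.
  rewrite -hphat.2 E esumD; [|by move=> x _; rewrite lee_fin|by move=> x _; rewrite lee_fin; case: eqP => // _; exact: ltW].
  by rewrite esum_point ?ltW.
have := hmax p hp; rewrite /emp_obj.
have Nge : 0 < N%:R^-1 :> R by rewrite invr_gt0 ltr0n.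
rewrite ler_pM2l // => H.
have : \sum_(i < N) phat (xs i) + c <= \sum_(i < N) p (xs i).
  have -> : \sum_(i < N) p (xs i) = \sum_(i < N) phat (xs i) + \sum_(i < N) h (xs i).
    rewrite -big_split /=; apply: eq_bigr => i _; by rewrite /p /f (negbTE (neq i)).
  rewrite [X in _ <= _ + X](bigD1 i0) //= /h eqxx.
  have : 0 <= \sum_(i < N | i != i0) h (xs i) by apply: sumr_ge0.
  move=> ?; lra.
move=> H2; have := le_trans H2 H; rewrite gerDl leNgt; by rewrite hy.
Qed.
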